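(* Let $\mathcal{G}$ and $\mathcal{G}'$ be abstract GKM graphs of types $(r,n)$ and $(r,n')$ for the same compact torus $T$ of rank $r$. Then $H_T^*(\mathcal{G})$ and $H_T^*(\mathcal{G}')$ are isomorphic as $H^*(BT)$-algebras if and only if $\mathcal{G}$ and $\mathcal{G}'$ are isomorphic as GKM graphs.
   Context: Let $T$ be a compact torus of rank $r$, so $H^*(BT)=\mathbb{Z}[x_1,\dots,x_r]$ with $\deg x_i=2$. An abstract GKM graph of type $(r,n)$ is a finite $n$-valent undirected graph (multi-edges allowed, no loops) with vertex set $\mathcal{V}$ and set of directed edges $\mathcal{E}$, together with an axial function $\alpha\colon\mathcal{E}\to H^2(BT)$ satisfying: $\alpha(\overline{e})=\pm\alpha(e)$ (where $\overline{e}$ is $e$ reversed); $\alpha(e),\alpha(e')$ are linearly independent over $\mathbb{Z}$ whenever $e\neq e'$ have the same initial vertex; and the coefficients of each $\alpha(e)$ have gcd $1$. Moreover it must admit a parallel transport: a family of bijections $\mathcal{P}_e\colon\mathcal{E}_{i(e)}\to\mathcal{E}_{t(e)}$ (where $\mathcal{E}_p$ denotes the directed edges with initial point $p$, and $i(e),t(e)$ the initial and terminal points of $e$) with $\mathcal{P}_{\overline{e}}=\mathcal{P}_e^{-1}$, $\mathcal{P}_e(e)=\overline{e}$, and $\alpha(\mathcal{P}_e(e'))-\alpha(e')\in\mathbb{Z}\,\alpha(e)$. The graph equivariant cohomology is $H_T^*(\mathcal{G})=\{f\colon\mathcal{V}\to H^*(BT)\mid \alpha(e)\text{ divides } f(i(e))-f(t(e))\text{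 for all }e\in\mathcal{E}\}$, a graded $H^*(BT)$-subalgebra of all functions $\mathcal{V}\to H^*(BT)$. For distinct vertices $p,q$ let $P_{pq}=\prod_{e\in\mathcal{E}_{pq}}\alpha(e)$, where $\mathcal{E}_{pq}$ is the set of directed edges from $p$ to $q$. An isomorphism $\mathcal{G}'\to\mathcal{G}$ of GKM graphs is a bijection $\varphi_{\mathcal{V}}\colon\mathcal{V}'\to\mathcal{V}$ with $P_{\varphi_{\mathcal{V}}(p')\varphi_{\mathcal{V}}(q')}=\pm P_{p'q'}$ for all vertices $p',q'$ of $\mathcal{G}'$. *)

(* Defs.v *)
From HB Require Import structures.
From mathcomp Require Import all_boot all_order all_algebra.
From mathcomp Require Import mpoly.
Set Implicit Arguments. Unset Strict Implicit. Unset Printing Implicit Defensive.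
Import Order.TTheory GRing.Theory Num.Theory.
Local Open Scope ring_scope.

(* H^*(BT) for a torus of rank r : integer polynomials in x_0..x_{r-1}
   (each x_i of cohomological degree 2). *)
Notation HBT r := {mpoly int[r]}.

(* H^2(BT) is the free abelian group Z^r of integral linear forms;
   an element is given by its coefficient row vector. *)
Notation H2BT r := 'rV[int]_r.

Definition lin (r : nat) (v : H2BT r) : HBT r :=
  \sum_(i < r) (v 0 i)%:MP * 'X_i.

Definition dvdH (r : nat) (a b : HBT r) : Prop := exists q : HBT r, b = q * a.

(* Raw data of a (multi)graph with an axial function:
   vertices, directed edges, initial/terminal point, reversal, axial function. *)
Record gkm_data (r : nat) := GkmData {
  gV : finType;
  gE : finType;
  gi : gE -> gV;
  gt : gE -> gV;
  grev : gE -> gE;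
  galpha : gE -> H2BT r
}.
Arguments gV {r} g.
Arguments gE {r} g.
Arguments gi {r} g _.
Arguments gt {r} g _.
Arguments grev {r} g _.
Arguments galpha {r} g _.

Definition Zindep (r : nat) (a b : H2BT r) : Prop :=
  forall k l : int, k *: a + l *: b = 0 -> k = 0 /\ l = 0.

Definition is_gkm (r n : nat) (G : gkm_data r) : Prop :=
  (* undirected graph: reversal is an involution without fixed points,
     swapping endpoints; no loops *)
  (forall e, grev G (grev G e) = e) /\
  (forall e, grev G e <> e) /\
  (forall e, gi G (grev G e) = gt G e) /\
  (forall e, gi G e <> gt G e) /\
  (forall p, #|[set e | gi G e == p]| = n) /\
  (forall e, galpha G (grev G e) = galpha G e \/
             galpha G (grev G e) = - galpha G e) /\
  (forall e e', e <> e' -> gi G e = gi G e' ->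
     Zindep (galpha G e) (galpha G e')) /\
  (forall e, \big[gcdz/0%Z]_(i < r) (galpha G e 0 i) = 1%Z) /\
  (* existence of a parallel transport: P e is a map E_{i(e)} -> E_{t(e)};
     P (rev e) (P e e') = e' for all e' in E_{i(e)}, applied to every edge,
     says exactly that P e is a bijection with inverse P (rev e). *)
  (exists P : gE G -> gE G -> gE G,
     forall e,
       P e e = grev G e /\
       forall e', gi G e' = gi G e ->
         gi G (P e e') = gt G e /\
         P (grev G e) (P e e') = e' /\
         exists k : int, galpha G (P e e') - galpha G e' = k *: galpha G e).

(* Graph equivariant cohomology H_T^*(G), as a subset of all functions V -> H^*(BT). *)
Definition HTG (r : nat) (G : gkm_data r) : (gV G -> HBT r) -> Prop :=
  fun f => forall e, dvdH (lin (galpha G e)) (f (gi G e) - f (gt G e)).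

Definition HT_alg_iso (r : nat) (G G' : gkm_data r) : Prop :=
  exists phi : (gV G -> HBT r) -> (gV G' -> HBT r),
    (forall f, HTG f -> HTG (phi f)) /\
    (forall f g, HTG f -> HTG g -> phi f = phi g -> f = g) /\
    (forall h, HTG h -> exists2 f, HTG f & phi f = h) /\
    (forall f g, HTG f -> HTG g -> phi (fun v => f v + g v) = (fun v => phi f v + phi g v)) /\
    (forall f g, HTG f -> HTG g -> phi (fun v => f v * g v) = (fun v => phi f v * phi g v)) /\
    (forall (c : HBT r) f, HTG f -> phi (fun v => c * f v) = (fun v => c * phi f v)) /\
    phi (fun _ => 1) = (fun _ => 1).

Definition Ppq (r : nat) (G : gkm_data r) (p q : gV G) : HBT r :=
  \prod_(e : gE G | (gi G e == p) && (gt G e == q)) lin (galpha G e).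

Definition gkm_iso (r : nat) (G' G : gkm_data r) : Prop :=
  exists phiV : gV G' -> gV G,
    bijective phiV /\
    forall p' q', p' <> q' ->
      Ppq (phiV p') (phiV q') = Ppq p' q' \/ Ppq (phiV p') (phiV q') = - Ppq p' q'.

(* Main.v *)
Require Import Defs.
From HB Require Import structures.
From mathcomp Require Import all_boot all_order all_algebra.
From mathcomp Require Import mpoly.
From mathcomp Require Import ring.
From Stdlib Require Import FunctionalExtensionality.
Set Implicit Arguments. Unset Strict Implicit. Unset Printing Implicit Defensive.
Import Order.TTheory GRing.Theory Num.Theory.
Local Open Scope ring_scope.



Definition prim {r : nat} (a : H2BT r) := \big[gcdz/0%Z]_(i < r) (a 0 i) = 1%Z.

Lemma lin_comb {r : nat} (c d : int) (a b : H2BT r) :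
  lin (c *: a - d *: b) = c%:MP * lin a - d%:MP * lin b.
Proof.
rewrite /lin !mulr_sumr -sumrB; apply: eq_bigr => i _.
rewrite !mxE rmorphB !rmorphM /=. ring.
Qed.

Lemma linN {r : nat} (a : H2BT r) : lin (- a) = - lin a.
Proof.
rewrite /lin -sumrN; apply: eq_bigr => i _.
by rewrite mxE rmorphN mulNr.
Qed.

Lemma lin_coef {r : nat} (a : H2BT r) j : (lin a)@_U_(j) = a 0 j.
Proof.
rewrite /lin raddf_sum (bigD1 j) //= mcoeffCM mcoeffXU eqxx mulr1 big1 ?addr0 //.
by move=> i /negPf hij; rewrite mcoeffCM mcoeffXU hij mulr0.
Qed.

Lemma lin_eq0 {r : nat} (a : H2BT r) : lin a = 0 -> a = 0.
Proof.
move=> h; apply/rowP => j; rewrite -lin_coef h mxE.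
by rewrite mcoeff0.
Qed.

Lemma prim_neq0 {r : nat} (a : H2BT r) : prim a -> a <> 0.
Proof.
rewrite /prim => h ha; move: h; rewrite ha.
suff -> : \big[gcdz/0%Z]_(i < r) (0 : H2BT r) 0 i = 0%Z by [].
apply: (big_ind (fun x => x = 0%Z)) => //; first by move=> x y -> ->.
by move=> i _; rewrite mxE.
Qed.

Lemma gcd_scale {r : nat} (k : int) (v : 'I_r -> int) :
  absz (\big[gcdz/0%Z]_(i < r) (k * v i)) = (absz k * absz (\big[gcdz/0%Z]_(i < r) v i))%N.
Proof.
apply: (big_ind2 (fun x y => absz x = (absz k * absz y)%N)).
- by rewrite muln0.
- move=> x1 x2 y1 y2 h1 h2; rewrite /gcdz /= h1 h2 muln_gcdr //.
- by move=> i _; rewrite abszM.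
Qed.

Definition subst {r : nat} (a : H2BT r) (j : 'I_r) : {mpoly int[r]} -> {mpoly int[r]} :=
  comp_mpoly [tuple (a 0 j)%:MP * 'X_i - (i == j)%:R * lin a | i < r].

Lemma subst_lin {r : nat} (a : H2BT r) (j : 'I_r) (b : H2BT r) : subst a j (lin b) = lin ((a 0 j) *: b - (b 0 j) *: a).
Proof.
rewrite lin_comb /subst {1}/lin raddf_sum /=.
under eq_bigr => i _ do rewrite rmorphM /= comp_mpolyC comp_mpolyXU -tnth_nth tnth_mktuple mulrBr mulrCA.
rewrite sumrB -mulr_sumr; congr (_ - _).
rewrite (bigD1 j) //= eqxx [X in _ + X]big1 ?addr0 ?mul1r //.
by move=> i /negPf ->; rewrite mul0r mulr0.
Qed.

Lemma subst_self {r : nat} (a : H2BT r) (j : 'I_r) : subst a j (lin a) = 0.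
Proof. by rewrite subst_lin subrr /lin big1 // => i _; rewrite mxE mul0r. Qed.

Lemma prim_par {r : nat} (a b : H2BT r) (j : 'I_r) : prim a -> prim b -> a 0 j != 0 ->
  subst a j (lin b) = 0 -> b = a \/ b = -a.
Proof.
move=> pa pb aj0; rewrite subst_lin => /lin_eq0 /rowP h.
have hi i : a 0 j * b 0 i = b 0 j * a 0 i.
  by move: (h i); rewrite !mxE => /eqP; rewrite subr_eq0 => /eqP.
have e : absz (a 0 j) = absz (b 0 j).
  have e1 := gcd_scale (a 0 j) (fun i => b 0 i).
  have e2 := gcd_scale (b 0 j) (fun i => a 0 i).
  rewrite /prim in pa pb; rewrite /= pb muln1 in e1; rewrite /= pa muln1 in e2.
  rewrite -e1 -e2; congr absz; apply: eq_bigr => i _; exact: hi i.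
have : (b 0 j == a 0 j) || (b 0 j == - a 0 j).
  by rewrite -eqr_norm2 -!abszE e.
case/orP => /eqP bj.
- left; apply/rowP => i; apply: (mulfI aj0); by rewrite hi bj.
- right; apply/rowP => i; rewrite mxE; apply: (mulfI aj0); by rewrite hi bj mulrN mulNr.
Qed.

Lemma prim_ex {r : nat} (a : H2BT r) : prim a -> exists j, a 0 j != 0.
Proof.
move=> pa; case: (boolP [exists j, a 0 j != 0]) => [/existsP //|/existsPn h].
exfalso; apply: (prim_neq0 pa); apply/rowP => j; rewrite mxE.
by move: (h j); rewrite negbK => /eqP.
Qed.

Lemma dvd_prod_lin {r : nat} (a : H2BT r) (T : finType) (P : pred T) (B : T -> H2BT r) :
  prim a -> (forall t, P t -> prim (B t)) ->
  dvdH (lin a) (\prod_(t | P t) lin (B t)) ->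
  exists t, P t /\ (B t = a \/ B t = - a).
Proof.
move=> pa pB [q hq]; have [j aj0] := prim_ex pa.
have : subst a j (\prod_(t | P t) lin (B t)) = 0.
  by rewrite hq /subst rmorphM /= -/(subst a j) subst_self mulr0.
rewrite /subst rmorph_prod /= -/(subst a j) => /eqP; rewrite prodf_seq_eq0.
case/hasP => t _ /andP [Pt /eqP ht]; exists t; split => //.
exact: prim_par pa (pB t Pt) aj0 ht.
Qed.

Lemma dvdH_sign {r : nat} (a b c : HBT r) : dvdH a b -> (c = a \/ c = - a) -> dvdH c b.
Proof.
move=> [q ->] [->|->]; first by exists q.
by exists (- q); rewrite mulrNN.
Qed.



Lemma gkm_revK {r n} {G : gkm_data r} : is_gkm n G -> forall e, grev G (grev G e) = e.
Proof. by case. Qed.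
Lemma gkm_irev {r n} {G : gkm_data r} : is_gkm n G -> forall e, gi G (grev G e) = gt G e.
Proof. by case=> _ [_ []]. Qed.
Lemma gkm_trev {r n} {G : gkm_data r} : is_gkm n G -> forall e, gt G (grev G e) = gi G e.
Proof. by move=> hG e; rewrite -(gkm_irev hG) (gkm_revK hG). Qed.
Lemma gkm_noloop {r n} {G : gkm_data r} : is_gkm n G -> forall e, gi G e <> gt G e.
Proof. by case=> _ [_ [_ []]]. Qed.
Lemma gkm_arev {r n} {G : gkm_data r} : is_gkm n G -> forall e,
  galpha G (grev G e) = galpha G e \/ galpha G (grev G e) = - galpha G e.
Proof. by case=> _ [_ [_ [_ [_ []]]]]. Qed.
Lemma gkm_indep {r n} {G : gkm_data r} : is_gkm n G -> forall e e', e <> e' -> gi G e = gi G e' ->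
     Zindep (galpha G e) (galpha G e').
Proof. by case=> _ [_ [_ [_ [_ [_ []]]]]]. Qed.
Lemma gkm_prim {r n} {G : gkm_data r} : is_gkm n G -> forall e, prim (galpha G e).
Proof. by case=> _ [_ [_ [_ [_ [_ [_ []]]]]]]. Qed.

Lemma Zindep_pm {r} (x y : H2BT r) : Zindep x y -> y = x \/ y = - x -> False.
Proof.
move=> h [hy|hy]; subst y.
- have := h 1 (-1); rewrite scaleN1r scale1r subrr => /(_ erefl).
  by case.
- have := h 1 1; rewrite !scale1r addrN => /(_ erefl).
  by case.
Qed.

Lemma gkm_uniq {r n} {G : gkm_data r} : is_gkm n G -> forall e e' (a : H2BT r),
  gi G e = gi G e' -> (galpha G e = a \/ galpha G e = - a) ->
  (galpha G e' = a \/ galpha G e' = - a) -> e = e'.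
Proof.
move=> hG e e' a hi h1 h2; case: (eqVneq e e') => // /eqP ne.
exfalso; apply: (Zindep_pm (gkm_indep hG ne hi)).
case: h1 h2 => -> [->|->]; rewrite ?opprK; tauto.
Qed.

Lemma dvdH0 {r} (a : HBT r) : dvdH a 0.
Proof. by exists 0; rewrite mul0r. Qed.
Lemma dvdHN {r} (a b : HBT r) : dvdH a b -> dvdH a (- b).
Proof. by move=> [q ->]; exists (- q); rewrite mulNr. Qed.
Lemma dvdHD {r} (a b c : HBT r) : dvdH a b -> dvdH a c -> dvdH a (b + c).
Proof. by move=> [q ->] [q' ->]; exists (q + q'); rewrite mulrDl. Qed.
Lemma dvdHM {r} (a b c : HBT r) : dvdH a b -> dvdH a (c * b).
Proof. by move=> [q ->]; exists (c * q); rewrite mulrA. Qed.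

Lemma lin_pm {r} (x y : H2BT r) : (x = y \/ x = - y) -> (lin x = lin y \/ lin x = - lin y).
Proof. by case=> ->; [left|right; rewrite linN]. Qed.
Lemma pm_sym {T : zmodType} (x y : T) : (x = y \/ x = - y) -> (y = x \/ y = - x).
Proof. by case=> ->; [left|right; rewrite opprK]. Qed.

Lemma dvdH_prod {r} (T : finType) (P : pred T) (F : T -> HBT r) t :
  P t -> dvdH (F t) (\prod_(t | P t) F t).
Proof. by move=> Pt; rewrite (bigD1 t) //=; exists (\prod_(j | P j && (j != t)) F j); rewrite mulrC. Qed.

Lemma lin_nz {r n} {G : gkm_data r} : is_gkm n G -> forall e, lin (galpha G e) != 0.
Proof. by move=> hG e; apply/eqP => /lin_eq0; apply: prim_neq0 (gkm_prim hG e). Qed.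

Lemma HTG_const {r} (G : gkm_data r) c : HTG (fun _ : gV G => c).
Proof. by move=> e; rewrite subrr; apply: dvdH0. Qed.
Lemma HTG_add {r} (G : gkm_data r) f g : HTG f -> HTG g -> HTG (fun v : gV G => f v + g v).
Proof.
move=> hf hg e; rewrite (_ : _ - _ = (f (gi G e) - f (gt G e)) + (g (gi G e) - g (gt G e))); last by ring.
exact: dvdHD.
Qed.
Lemma HTG_scal {r} (G : gkm_data r) c f : HTG f -> HTG (fun v : gV G => c * f v).
Proof. by move=> hf e; rewrite -mulrBr; apply: dvdHM. Qed.
Lemma HTG_mul {r} (G : gkm_data r) f g : HTG f -> HTG g -> HTG (fun v : gV G => f v * g v).
Proof.
move=> hf hg e; rewrite (_ : _ - _ = f (gi G e) * (g (gi G e) - g (gt G e)) + g (gt G e) * (f (gi G e) - f (gt G e))); last by ring.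
by apply: dvdHD; apply: dvdHM.
Qed.
Lemma HTG_sum {r} (G : gkm_data r) (s : seq (gV G)) (F : gV G -> gV G -> HBT r) :
  (forall p, HTG (F p)) -> HTG (fun v => \sum_(p <- s) F p v).
Proof.
move=> hF; elim: s => [|a s IH].
  have -> : (fun v => \sum_(p <- [::]) F p v) = (fun _ => 0).
    by apply: functional_extensionality => v; rewrite big_nil.
  exact: HTG_const.
have -> : (fun v => \sum_(p <- a :: s) F p v) = (fun v => F a v + \sum_(p <- s) F p v).
  by apply: functional_extensionality => v; rewrite big_cons.
exact: HTG_add.
Qed.

Definition tau {r} (G : gkm_data r) (p : gV G) : gV G -> HBT r :=
  fun v => if v == p then \prod_(e | gi G e == p) lin (galpha G e) else 0.

Lemma tau_HTG {r n} {G : gkm_data r} : is_gkm n G -> forall p : gV G, HTG (tau p).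
Proof.
move=> hG p e; rewrite /tau.
case: (eqVneq (gi G e) p) => hi; case: (eqVneq (gt G e) p) => ht.
- by rewrite subrr; apply: dvdH0.
- by rewrite subr0; apply: dvdH_prod; rewrite hi.
- rewrite sub0r; apply: dvdHN; apply: (@dvdH_sign _ (lin (galpha G (grev G e)))).
    by apply: dvdH_prod; rewrite (gkm_irev hG) ht.
  by apply: lin_pm; apply: pm_sym; apply: gkm_arev hG e.
- by rewrite subrr; apply: dvdH0.
Qed.

Lemma tau_pp {r n} {G : gkm_data r} : is_gkm n G -> forall p : gV G, tau p p != 0.
Proof.
move=> hG p; rewrite /tau eqxx; apply/prodf_neq0 => e _; exact: lin_nz hG e.
Qed.


Lemma eval_hom {r n} {G : gkm_data r} (hG : is_gkm n G) (psi : (gV G -> HBT r) -> HBT r)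
 (Hadd : forall f g, HTG f -> HTG g -> psi (fun v => f v + g v) = psi f + psi g)
 (Hmul : forall f g, HTG f -> HTG g -> psi (fun v => f v * g v) = psi f * psi g)
 (Hscal : forall c f, HTG f -> psi (fun v => c * f v) = c * psi f)
 (H1 : psi (fun _ => 1) = 1) :
 (exists p, psi (tau p) != 0) /\ (forall q f, psi (tau q) != 0 -> HTG f -> psi f = f q).
Proof.
have H0 : psi (fun _ => 0) = 0.
  by have := Hscal 0 (fun _ => 1) (@HTG_const r G 1); rewrite !mul0r.
have Hsum : forall (s : seq (gV G)) (F : gV G -> gV G -> HBT r), (forall p, HTG (F p)) ->
    psi (fun v => \sum_(p <- s) F p v) = \sum_(p <- s) psi (F p).
  move=> s F hF; elim: s => [|a s IH].
    have -> : (fun v => \sum_(p <- [::]) F p v) = (fun _ => 0).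
      by apply: functional_extensionality => v; rewrite big_nil.
    by rewrite H0 big_nil.
  have -> : (fun v => \sum_(p <- a :: s) F p v) = (fun v => F a v + \sum_(p <- s) F p v).
    by apply: functional_extensionality => v; rewrite big_cons.
  by rewrite Hadd ?IH ?big_cons //; apply: HTG_sum.
split.
- pose c := \prod_(p : gV G) tau p p.
  have cnz : c != 0 by apply/prodf_neq0 => p _; exact: tau_pp hG p.
  pose cp := fun p : gV G => \prod_(q | q != p) tau q q.
  have eq : (fun v : gV G => c * 1) =
            (fun v => \sum_(p <- index_enum (gV G)) (fun w => cp p * tau p w) v).
    apply: functional_extensionality => v; rewrite mulr1.
    change (c = \sum_(p : gV G) cp p * tau p v).
    rewrite (bigD1 v) //= big1 ?addr0; last first.
      by move=> p hp; rewrite /tau eq_sym (negPf hp) mulr0.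
    by rewrite /c (bigD1 v) //= mulrC.
  have := congr1 psi eq; rewrite Hscal ?H1 ?mulr1; last exact: (@HTG_const r G 1).
  rewrite Hsum; last by move=> p; exact: (HTG_scal _ (tau_HTG hG p)).
  case: (boolP [exists p, psi (tau p) != 0]) => [/existsP //| /existsPn hn].
  rewrite big1 => [hc|p _]; first by rewrite hc eqxx in cnz.
  rewrite Hscal; last exact: tau_HTG hG p.
  by move: (hn p); rewrite negbK => /eqP ->; rewrite mulr0.
- move=> q f hq hf.
  have e1 : (fun w => f w * tau q w) = (fun w => f q * tau q w).
    by apply: functional_extensionality => w; rewrite /tau; case: eqP => [->|]; rewrite ?mulr0.
  have := congr1 psi e1.
  rewrite (Hmul f (tau q) hf (tau_HTG hG q)) (Hscal (f q) (tau q) (tau_HTG hG q)).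
  by move/eqP; rewrite -subr_eq0 -mulrBl mulf_eq0 (negPf hq) orbF subr_eq0 => /eqP.
Qed.


Lemma claimC {r n} {G : gkm_data r} (hG : is_gkm n G) (p q : gV G) (a : H2BT r) :
  prim a -> p <> q -> (forall f, HTG f -> dvdH (lin a) (f p - f q)) ->
  exists e, gi G e = p /\ gt G e = q /\ (galpha G e = a \/ galpha G e = - a).
Proof.
move=> pa pq H.
pose isa e := (galpha G e == a) || (galpha G e == - a).
case: (boolP [exists e, [&& gi G e == p, gt G e == q & isa e]]).
  case/existsP => e /and3P [/eqP h1 /eqP h2 h3]; exists e; split => //; split => //.
  by case/orP: h3 => /eqP; [left|right].
move/existsPn => hno.
pose N v := (v == p) || [exists e, [&& gi G e == p, gt G e == v & isa e]].
pose g := \prod_(e | N (gi G e) && ~~ isa e) lin (galpha G e).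
pose h v := if N v then g else 0.
have KE : forall e, N (gi G e) -> ~~ N (gt G e) -> dvdH (lin (galpha G e)) g.
  move=> e hi ht; case: (boolP (isa e)) => ha; last by apply: dvdH_prod; rewrite hi ha.
  exfalso; move: ht; rewrite /N negb_or => /andP [hne /existsPn hx].
  case/orP: hi => [/eqP hp | /existsP [e0 /and3P [/eqP h0 /eqP h0' ha0]]].
  - by move: (hx e); rewrite hp !eqxx ha.
  - have ee : e = grev G e0.
      apply: (gkm_uniq hG (a:=a)).
      + by rewrite (gkm_irev hG) h0'.
      + by case/orP: ha => /eqP; tauto.
      + case/orP: ha0 => /eqP h5; case: (gkm_arev hG e0); rewrite h5 ?opprK; tauto.
    by move: hne; rewrite ee (gkm_trev hG) h0 eqxx.
have hh : HTG h.
  move=> e; rewrite /h; case: (boolP (N (gi G e))) => hi; case: (boolP (N (gt G e))) => ht.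
  - by rewrite subrr; apply: dvdH0.
  - by rewrite subr0; apply: KE.
  - rewrite sub0r; apply: dvdHN; apply: (@dvdH_sign _ (lin (galpha G (grev G e)))).
      by apply: KE; rewrite ?(gkm_irev hG) ?(gkm_trev hG).
    exact: lin_pm (pm_sym (gkm_arev hG e)).
  - by rewrite subrr; apply: dvdH0.
have := H h hh; rewrite /h.
have -> : N p by rewrite /N eqxx.
have -> : N q = false.
  apply/negbTE; rewrite /N negb_or; apply/andP; split.
    by apply/eqP => hq; apply: pq.
  by apply/existsPn => e; exact: hno e.
rewrite subr0 => /(dvd_prod_lin pa) [e _|e [/andP [_ hna] hae]].
  exact: gkm_prim hG e.
by case: hae => hae; rewrite /isa hae eqxx ?orbT in hna.
Qed.

Lemma prod_pm {r} (T : finType) (P : pred T) (F G : T -> HBT r) :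
  (forall t, P t -> F t = G t \/ F t = - G t) ->
  \prod_(t | P t) F t = \prod_(t | P t) G t \/ \prod_(t | P t) F t = - \prod_(t | P t) G t.
Proof.
move=> h; apply: (big_ind2 (fun x y => x = y \/ x = - y)); first by left.
  move=> x1 x2 y1 y2 [->|->] [->|->].
  - by left.
  - by right; rewrite mulrN.
  - by right; rewrite mulNr.
  - by left; rewrite mulrNN.
exact: h.
Qed.

Lemma prod_match {r} (T T' : finType) (P : pred T) (P' : pred T') (A : T -> H2BT r) (A' : T' -> H2BT r) :
 (forall t, P t -> exists t', P' t' /\ (A t = A' t' \/ A t = - A' t')) ->
 (forall t', P' t' -> exists t, P t /\ (A t = A' t' \/ A t = - A' t')) ->
 (forall t1 t2 x, P t1 -> P t2 -> (A t1 = x \/ A t1 = -x) -> (A t2 = x \/ A t2 = -x) -> t1 = t2) ->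
 (forall t1 t2 x, P' t1 -> P' t2 -> (A' t1 = x \/ A' t1 = -x) -> (A' t2 = x \/ A' t2 = -x) -> t1 = t2) ->
 \prod_(t | P t) lin (A t) = \prod_(t' | P' t') lin (A' t') \/
 \prod_(t | P t) lin (A t) = - \prod_(t' | P' t') lin (A' t').
Proof.
move=> h1 h2 u u'.
pose m t t' := (A t == A' t') || (A t == - A' t').
have mP t t' : reflect (A t = A' t' \/ A t = - A' t') (m t t').
  apply: (iffP orP).
  - by case=> /eqP ->; [left|right].
  - by case=> ->; [left|right]; rewrite eqxx.
have E1 : \prod_(t | P t) lin (A t) = \prod_(t | P t) \prod_(t' | P' t' && m t t') lin (A t).
  apply: eq_bigr => t Pt; have [t0 [P0 m0]] := h1 t Pt.
  rewrite (big_pred1 t0) // => t' /=; apply/andP/eqP => [[Pt' /mP mt']|->].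
    by apply: (u' t' t0 (A t)) => //; apply: pm_sym.
  by split => //; apply/mP.
rewrite E1 (exchange_big_dep P') /=; last by move=> i j _ /andP [].
apply: prod_pm => t' Pt'; have [t0 [P0 m0]] := h2 t' Pt'.
rewrite (big_pred1 t0); first exact: lin_pm.
move=> t /=; apply/andP/eqP => [[Pt /andP [_ /mP mt]]|->].
  exact: (u t t0 (A' t')).
by split => //; rewrite Pt' /=; apply/mP.
Qed.


Lemma L1 {r n n'} {G : gkm_data r} {G' : gkm_data r} (hG : is_gkm n G) (hG' : is_gkm n' G')
  (s : gV G' -> gV G) :
  (forall p' q', p' <> q' -> Ppq (s p') (s q') = Ppq p' q' \/ Ppq (s p') (s q') = - Ppq p' q') ->
  forall f, HTG f -> HTG (fun v' => f (s v')).
Proof.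
move=> hP f hf e' /=.
have d : dvdH (lin (galpha G' e')) (Ppq (s (gi G' e')) (s (gt G' e'))).
  have d0 : dvdH (lin (galpha G' e')) (Ppq (gi G' e') (gt G' e')).
    by rewrite /Ppq; apply: dvdH_prod; rewrite !eqxx.
  have ne : gi G' e' <> gt G' e' := gkm_noloop hG' (e:=e').
  by case: (hP _ _ ne) => ->; last apply: dvdHN.
rewrite /Ppq in d.
have [e [/andP [/eqP hi /eqP ht] hae]] := dvd_prod_lin (gkm_prim hG' e') (fun e _ => gkm_prim hG e) d.
have := hf e; rewrite hi ht => hd.
apply: (dvdH_sign hd); exact: lin_pm (pm_sym hae).
Qed.

Theorem theorem1p1 (r n n' : nat) (G : gkm_data r) (G' : gkm_data r) :
  is_gkm n G -> is_gkm n' G' ->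
  (HT_alg_iso G G' <-> gkm_iso G' G).
Proof.
move=> hG hG'; split.
- case=> phi [H1 [H2 [H3 [H4 [H5 [H6 H7]]]]]].
  have ev v' := eval_hom hG (psi := fun f => phi f v')
    (fun f g hf hg => congr1 (fun F => F v') (H4 f g hf hg))
    (fun f g hf hg => congr1 (fun F => F v') (H5 f g hf hg))
    (fun c f hf => congr1 (fun F => F v') (H6 c f hf))
    (congr1 (fun F => F v') H7).
  have hex v' : exists p, phi (tau p) v' != 0 := (ev v').1.
  pose s v' := xchoose (hex v').
  have hs v' f : HTG f -> phi f v' = f (s v').
    by move=> hf; apply: (ev v').2 => //; exact: (xchooseP (hex v')).
  have phi0 v' : phi (fun _ => 0) v' = 0 by rewrite hs //; exact: HTG_const.
  have sinj : injective s.
    move=> v1 v2 e; apply/eqP; apply/negPn/negP => ne.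
    have [f hf hf'] := H3 _ (tau_HTG hG' v1).
    have := tau_pp hG' v1; rewrite -hf' (hs _ _ hf) e -(hs _ _ hf) hf'.
    rewrite /tau (_ : (v2 == v1) = false) ?eqxx //.
    by apply/negbTE; rewrite eq_sym.
  have ssurj : forall p, exists v', s v' == p.
    move=> p; case: (boolP [exists v', s v' == p]) => [/existsP //|/existsPn hn].
    exfalso; have e0 : phi (tau p) = phi (fun _ => 0).
      apply: functional_extensionality => v'.
      by rewrite phi0 (hs _ _ (tau_HTG hG p)) /tau (negPf (hn v')).
    have := H2 _ _ (tau_HTG hG p) (@HTG_const _ G 0) e0 => /(congr1 (fun F => F p)) hp.
    by have := tau_pp hG p; rewrite hp eqxx.
  pose g p := xchoose (ssurj p).
  have sg p : s (g p) = p := eqP (xchooseP (ssurj p)).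
  exists s; split.
    by exists g => [v'|p]; [apply: sinj; rewrite sg | exact: sg].
  move=> p' q' ne; rewrite /Ppq; apply: prod_match.
  + move=> t /andP [/eqP hi /eqP ht].
    have [e' [hi' [ht' hae]]] : exists e', gi G' e' = p' /\ gt G' e' = q' /\
        (galpha G' e' = galpha G t \/ galpha G' e' = - galpha G t).
      apply: (claimC hG' (gkm_prim hG t) ne) => h hh.
      have [f hf <-] := H3 h hh; rewrite !(hs _ _ hf).
      by have := hf t; rewrite hi ht.
    by exists e'; rewrite hi' ht' !eqxx; split => //; apply: pm_sym.
  + move=> t' /andP [/eqP hi /eqP ht].
    have [e [hi' [ht' hae]]] : exists e, gi G e = s p' /\ gt G e = s q' /\
        (galpha G e = galpha G' t' \/ galpha G e = - galpha G' t').
      apply: (claimC hG (gkm_prim hG' t') (fun E => ne (sinj _ _ E))) => f hf.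
      rewrite -!(hs _ _ hf); by have := H1 f hf t'; rewrite hi ht.
    by exists e; rewrite hi' ht' !eqxx.
  + move=> t1 t2 x /andP [/eqP h1 _] /andP [/eqP h2 _]; apply: (gkm_uniq hG).
    by rewrite h1 h2.
  + move=> t1 t2 x /andP [/eqP h1 _] /andP [/eqP h2 _]; apply: (gkm_uniq hG').
    by rewrite h1 h2.
- case=> s [[g sg gs] hP].
  have hP' : forall p q, p <> q -> Ppq (g p) (g q) = Ppq p q \/ Ppq (g p) (g q) = - Ppq p q.
    move=> p q ne; have ne' : g p <> g q.
      by move=> e; apply: ne; rewrite -(gs p) -(gs q) e.
    by have := hP _ _ ne'; rewrite !gs; apply: pm_sym.
  exists (fun f v' => f (s v')); split; [|split; [|split; [|split; [|split; [|split]]]]] => //.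
  + move=> f hf; exact: (L1 hG hG' hP hf).
  + move=> f1 f2 _ _ e; apply: functional_extensionality => v; rewrite -(gs v).
    exact: (congr1 (fun F => F (g v)) e).
  + move=> h hh; exists (fun v => h (g v)); first exact: (L1 hG' hG hP' hh).
    by apply: functional_extensionality => v'; rewrite sg.
Qed.
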